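(* Let $(X,d)$ be a metric space and let $u,u_1,u_2,\ldots\in F_{USCG}(X)$. Then the following statements are equivalent: (i) $H_{\rm end}(u_n,u)\to0$; (ii) $H([u_n]_\alpha,[u]_\alpha)\to0$ for almost every $\alpha\in(0,1)$ (Lebesgue measure); (iii) $H([u_n]_\alpha,[u]_\alpha)\to0$ for all $\alpha\in(0,1)\setminus P(u)$; (iv) there is a dense subset $P$ of $(0,1)\setminus P(u)$ such that $H([u_n]_\alpha,[u]_\alpha)\to0$ for all $\alpha\in P$; (v) there is a countable dense subset $P$ of $(0,1)\setminus P(u)$ such that $H([u_n]_\alpha,[u]_\alpha)\to0$ for all $\alpha\in P$.
   Context: A fuzzy set on $X$ is a function $u:X\to[0,1]$, with $\alpha$-cuts $[u]_\alpha=\{x: u(x)\ge\alpha\}$ for $\alpha\in(0,1]$ and $[u]_0=\overline{\{u>0\}}$. $F_{USC}(X)$ is the set of fuzzy sets with all $\alpha$-cuts ($\alpha\in[0,1]$) non-empty and closed; $F_{USCG}(X)=\{u\in F_{USC}(X): [u]_\alpha\text{ compact for all }\alpha\in(0,1]\}$. For non-empty closed sets $U,V$ in a metric space $(Y,\rho)$, $H(U,V)=\max\{\sup_{a\in U}\inf_{b\in V}\rho(a,b),\sup_{b\in V}\inf_{a\in U}\rho(a,b)\}$. $X\times[0,1]$ is metrized by $\overline{d}((x,\alpha),(y,\beta))=d(x,y)+|\alpha-\beta|$, ${\rm end}\,u=\{(x,t)\in X\times[0,1]: u(x)\ge t\}$, $H_{\rm end}(u,v)=H({\rm end}\,u,{\rm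 end}\,v)$. A number $\alpha\in(0,1)$ is a platform point of $u$ if $\overline{\{u>\alpha\}}\subsetneqq[u]_\alpha$; $P(u)$ is the set of platform points of $u$. *)

(* Defs.v *)
From HB Require Import structures.
From mathcomp Require Import all_boot all_order all_algebra.
From mathcomp Require Import all_classical all_reals all_analysis.
Set Implicit Arguments. Unset Strict Implicit. Unset Printing Implicit Defensive.
Import Order.TTheory GRing.Theory Num.Theory.
Local Open Scope classical_set_scope.
Local Open Scope ring_scope.

Section FuzzyDefs.
Variable R : realType.

Definition is_metric (Y : Type) (rho : Y -> Y -> R) : Prop :=
  [/\ forall x y, 0 <= rho x y,
      forall x y, rho x y = 0 <-> x = y,
      forall x y, rho x y = rho y x &
      forall x y z, rho x z <= rho x y + rho y z].

Section Metric.
Variables (Y : Type) (rho : Y -> Y -> R).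

Definition mball (x : Y) (r : R) : set Y := [set y | rho x y < r].

Definition mopen (A : set Y) : Prop :=
  forall x, A x -> exists2 r : R, 0 < r & mball x r `<=` A.

Definition mclosure (A : set Y) : set Y :=
  [set x | forall e : R, 0 < e -> exists2 y, A y & rho x y < e].

Definition mclosed (A : set Y) : Prop := mclosure A `<=` A.

Definition mcompact (A : set Y) : Prop :=
  forall (I : Type) (U : I -> set Y), (forall i, mopen (U i)) ->
    A `<=` \bigcup_i U i ->
    exists2 F : set I, finite_set F & A `<=` \bigcup_(i in F) U i.

Definition pdist (a : Y) (V : set Y) : \bar R :=
  ereal_inf [set (rho a b)%:E | b in V].

Definition hausdorff (U V : set Y) : \bar R :=
  maxe (ereal_sup [set pdist a V | a in U])
       (ereal_sup [set pdist b U | b in V]).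
End Metric.

Section Fuzzy.
Variables (X : Type) (d : X -> X -> R).

Definition cut (u : X -> R) (a : R) : set X :=
  if a == 0 then mclosure d [set x | 0 < u x] else [set x | a <= u x].

Definition is_fuzzy (u : X -> R) : Prop := forall x, 0 <= u x <= 1.

Definition F_USC (u : X -> R) : Prop :=
  is_fuzzy u /\
  forall a : R, 0 <= a <= 1 -> cut u a !=set0 /\ mclosed d (cut u a).

Definition F_USCG (u : X -> R) : Prop :=
  F_USC u /\ forall a : R, 0 < a <= 1 -> mcompact d (cut u a).

Definition dbar (p q : X * R) : R := d p.1 q.1 + `|p.2 - q.2|.

Definition endo (u : X -> R) : set (X * R) :=
  [set p | 0 <= p.2 <= 1 /\ p.2 <= u p.1].

Definition Hend (u v : X -> R) : \bar R := hausdorff dbar (endo u) (endo v).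

Definition platform (u : X -> R) : set R :=
  [set a | 0 < a < 1 /\
     mclosure d [set x | a < u x] `<=` cut u a /\
     mclosure d [set x | a < u x] <> cut u a].

Definition cut_cvg (us : nat -> X -> R) (u : X -> R) (a : R) : Prop :=
  (fun n => hausdorff d (cut (us n) a) (cut u a)) @ \oo --> 0%E.

Definition dense_in (P Y : set R) : Prop :=
  forall y, Y y -> forall e : R, 0 < e -> exists2 p, P p & `|p - y| < e.
End Fuzzy.
End FuzzyDefs.

(* Main.v *)
Require Import Defs.
From HB Require Import structures.
From mathcomp Require Import all_boot all_order all_algebra.
From mathcomp Require Import all_classical all_reals all_analysis.
From mathcomp Require Import lra.
Import Order.TTheory GRing.Theory Num.Theory.
Local Open Scope classical_set_scope.
Local Open Scope ring_scope.

Set Implicit Arguments. Unset Strict Implicit.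

Section Gen.
Variable R : realType.
Variables (Y : Type) (rho : Y -> Y -> R).
Hypothesis hr : is_metric rho.

Lemma rho_ge0 a b : 0 <= rho a b. Proof. by case: hr. Qed.
Lemma rho_xx a : rho a a = 0. Proof. by case: hr => _ h _ _; apply/h. Qed.
Lemma rhoC a b : rho a b = rho b a. Proof. by case: hr. Qed.
Lemma rho_tri a b c : rho a c <= rho a b + rho b c. Proof. by case: hr. Qed.

Lemma pdist_ge0 a V : (0 <= pdist rho a V)%E.
Proof. by apply: le_ereal_inf_tmp => _ [b Vb <-]; rewrite lee_fin rho_ge0. Qed.

Lemma pdist_le a V b : V b -> (pdist rho a V <= (rho a b)%:E)%E.
Proof. by move=> Vb; apply: ereal_inf_lbound; exists b. Qed.

Lemma pdist_lt a V (e : R) : (pdist rho a V < e%:E)%E -> exists2 b, V b & rho a b < e.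
Proof. by move=> /ereal_inf_lt [_ [b Vb <-]]; rewrite lte_fin => h; exists b. Qed.

Lemma haus_le U V (e : R) :
  (forall a, U a -> exists2 b, V b & rho a b <= e) ->
  (forall b, V b -> exists2 a, U a & rho b a <= e) ->
  (hausdorff rho U V <= e%:E)%E.
Proof.
move=> h1 h2; rewrite /hausdorff ge_max; apply/andP; split; apply: ge_ereal_sup.
  move=> _ [a Ua <-]; have [b Vb hb] := h1 a Ua.
  by apply: le_trans (pdist_le _ Vb) _; rewrite lee_fin.
move=> _ [b Vb <-]; have [a Ua ha] := h2 b Vb.
by apply: le_trans (pdist_le _ Ua) _; rewrite lee_fin.
Qed.

Lemma haus_lt_l U V (e : R) : (hausdorff rho U V < e%:E)%E ->
  forall a, U a -> exists2 b, V b & rho a b < e.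
Proof.
move=> h a Ua; apply: pdist_lt; apply: le_lt_trans h.
rewrite le_max; apply/orP; left; apply: ereal_sup_ubound; by exists a.
Qed.

Lemma haus_lt_r U V (e : R) : (hausdorff rho U V < e%:E)%E ->
  forall b, V b -> exists2 a, U a & rho b a < e.
Proof.
move=> h b Vb; apply: pdist_lt; apply: le_lt_trans h.
rewrite le_max; apply/orP; right; apply: ereal_sup_ubound; by exists b.
Qed.

Lemma haus_ge0 U V : U !=set0 -> (0 <= hausdorff rho U V)%E.
Proof.
move=> [a Ua]; rewrite le_max; apply/orP; left.
apply: le_trans (pdist_ge0 a V) _; apply: ereal_sup_ubound; by exists a.
Qed.
End Gen.

Section Cvg.
Variable R : realType.

Lemma cvg0P (f : nat -> \bar R) : (forall n, (0 <= f n)%E) ->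
  f @ \oo --> 0%E <-> forall e : R, 0 < e -> \forall n \near \oo, (f n <= e%:E)%E.
Proof.
move=> f0; rewrite fine_cvgP; split.
  move=> [hfin /cvgrPdist_le hc] e e0.
  have hh := hc e e0.
  near=> n.
  have hf : f n \is a fin_num by near: n.
  have : `|0 - fine (f n)| <= e by near: n; exact: hh.
  by rewrite sub0r normrN -(fineK hf) /= lee_fin => /(le_trans (ler_norm _)).
move=> h; split.
  near=> n; have : (f n <= 1%:E)%E by near: n; exact: h.
  have := f0 n; case: (f n) => //.
apply/cvgrPdist_le => e e0; near=> n.
have : (f n <= e%:E)%E by near: n; exact: h.
rewrite /=; have := f0 n; case: (f n) => //= r; rewrite !lee_fin sub0r normrN => r0 re.
by rewrite ger0_norm.
Unshelve. all: by end_near.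
Qed.
End Cvg.

Section Top.
Variable R : realType.
Variables (Y : Type) (rho : Y -> Y -> R).
Hypothesis hr : is_metric rho.

Lemma mopen_near (A : set Y) (r : R) :
  mopen rho [set y | exists2 z, A z & rho z y < r].
Proof.
move=> x [z Az hz]; exists (r - rho z x); first by rewrite subr_gt0.
move=> y; rewrite /mball /= => hy; exists z => //.
apply: le_lt_trans (rho_tri hr z x y) _; lra.
Qed.

Lemma mopen_ball x (r : R) : mopen rho (mball rho x r).
Proof.
move=> y; rewrite /mball /= => hy; exists (r - rho x y); first by rewrite subr_gt0.
move=> z; rewrite /mball /= => hz; have := rho_tri hr x y z; lra.
Qed.

Lemma mopenU (A B : set Y) : mopen rho A -> mopen rho B -> mopen rho (A `|` B).
Proof.
move=> oA oB x [/oA [r r0 h]|/oB [r r0 h]]; exists r => // y /h; by [left|right].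
Qed.

Lemma mopen_closedC (A : set Y) : mclosed rho A -> mopen rho (~` A).
Proof.
move=> cA x nAx.
have : ~ mclosure rho A x by move=> /cA.
move=> /existsNP [e /not_implyP [e0 /forall2NP h]].
exists e => // y; rewrite /mball /= => hy Ay.
by case: (h y) => //; apply; rewrite hy.
Qed.

Lemma compact_nat (K : set Y) (W : nat -> set Y) : mcompact rho K ->
  (forall m, mopen rho (W m)) -> (forall m n, (m <= n)%N -> W m `<=` W n) ->
  K `<=` \bigcup_m W m -> exists M, K `<=` W M.
Proof.
move=> cK oW incW cov.
have [F fF hF] := cK nat W oW cov.
have [B hB] := (@finite_fsetP _ F).1 fF.
exists (\max_(i <- finmap.enum_fset B) i)%N => y /hF [i Fi Wy].
apply: incW Wy; apply: (@leq_bigmax_seq _ (finmap.enum_fset B) xpredT id) => //.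
by move: Fi; rewrite hB.
Qed.
End Top.

Section Fz.
Variable R : realType.
Variables (X : Type) (d : X -> X -> R).
Hypothesis hd : is_metric d.
Variable u : X -> R.
Hypothesis hu : F_USCG d u.

Lemma u_ge0 x : 0 <= u x.
Proof. by case: hu => [[hf _] _]; case/andP: (hf x). Qed.
Lemma u_le1 x : u x <= 1.
Proof. by case: hu => [[hf _] _]; case/andP: (hf x). Qed.

Lemma cutE (a : R) : 0 < a -> Defs.cut d u a = [set x | a <= u x].
Proof. by move=> a0; rewrite /Defs.cut gt_eqF. Qed.

Lemma cut_closed (a : R) : 0 < a <= 1 -> mclosed d [set x | a <= u x].
Proof.
move=> /andP[a0 a1]; case: hu => [[_ h] _].
by have [_] := h a (introT andP (conj (ltW a0) a1)); rewrite cutE.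
Qed.

Lemma cut_compact (a : R) : 0 < a <= 1 -> mcompact d [set x | a <= u x].
Proof. by move=> /andP[a0 a1]; case: hu => _ h; rewrite -cutE //; apply: h; rewrite a0. Qed.

Lemma cut_ne (a : R) : 0 < a <= 1 -> exists x, a <= u x.
Proof.
move=> /andP[a0 a1]; case: hu => [[_ h] _].
by have [[x hx] _] := h a (introT andP (conj (ltW a0) a1)); move: hx; rewrite cutE // => hx; exists x.
Qed.

Lemma mopen_lt c : mopen d [set x | u x < c].
Proof.
move=> x /= hx.
have [c0|c0] := leP c 0.
  by have := u_ge0 x; lra.
have [c1|c1] := leP c 1.
  have nx : ~ [set y | c <= u y] x by move=> /= h; lra.
  have [r r0 hb] := mopen_closedC (cut_closed (introT andP (conj c0 c1))) nx.
  exists r => // y /hb /= h; rewrite ltNge; apply/negP => h'; exact: h.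
by exists 1 => // y _ /=; have := u_le1 y; lra.
Qed.

Lemma inv_le (m n : nat) : (m <= n)%N -> (n.+1%:R : R)^-1 <= (m.+1%:R)^-1.
Proof. by move=> mn; rewrite lef_pV2 ?posrE ?ltr0n // ler_nat. Qed.

Lemma left_cont (a : R) (a0 : 0 < a) (a1 : a <= 1) (e : R) (e0 : 0 < e) :
  exists b, [/\ 0 < b, b < a & forall x, b <= u x -> exists2 z, a <= u z & d x z < e].
Proof.
pose A := [set y | exists2 z, [set z | a <= u z] z & d z y < e].
pose W m := A `|` [set x | u x < a - (m.+1%:R)^-1].
have a20 : 0 < a / 2 <= 1 by apply/andP; split; lra.
have ha0 : 0 < a / 2 by lra.
have ha1 : a / 2 < a by lra.
have [M hM] : exists M, [set x | a / 2 <= u x] `<=` W M.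
  apply: (compact_nat (cut_compact a20)).
  - by move=> m; apply: mopenU; [exact: mopen_near | exact: mopen_lt].
  - move=> m n mn x [h|/= h]; [by left | right => /=].
    by apply: lt_le_trans h _; rewrite lerD2l lerN2 inv_le.
  move=> x _; have [ax|xa] := leP a (u x).
    by exists 0%N => //; left; exists x => //; rewrite rho_xx.
  by have [k hk] := ltr_add_invr xa; exists k => //; right => /=; rewrite ltrBrDr.
have iM : 0 < (M.+1%:R : R)^-1 by rewrite invr_gt0 ltr0n.
exists (Num.max (a / 2) (a - (M.+1%:R)^-1)); split.
- by rewrite lt_max ha0.
- have h2 : a - (M.+1%:R)^-1 < a by rewrite ltrBlDr ltrDl iM.
  by rewrite gt_max ha1 h2.
move=> x; rewrite ge_max => /andP[h1 h2].
have [[z hz hdz]|/= h] := hM x h1; last by move: h; rewrite ltNge h2.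
by exists z => //; rewrite rhoC.
Qed.

Lemma cl_sub_cut (a : R) : 0 < a <= 1 ->
  mclosure d [set x | a < u x] `<=` [set x | a <= u x].
Proof.
move=> ha y hy; apply: (cut_closed ha) => e e0.
by have [z hz hdz] := hy e e0; exists z => //; apply: ltW.
Qed.

Lemma nonplat (a : R) : 0 < a < 1 -> ~ platform d u a ->
  forall y, a <= u y -> forall e, 0 < e -> exists2 z, a < u z & d y z < e.
Proof.
move=> /andP[a0 a1] np y ay.
have ha : 0 < a <= 1 by rewrite a0 ltW.
have eq : mclosure d [set x | a < u x] = Defs.cut d u a.
  apply: contrapT => neq; apply: np; split; first by rewrite a0 a1.
  by split => //; rewrite cutE //; exact: cl_sub_cut.
have : mclosure d [set x | a < u x] y by rewrite eq cutE.
by [].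
Qed.

Lemma right_cont (a : R) (a0 : 0 < a) (a1 : a < 1) (np : ~ platform d u a) (e : R) (e0 : 0 < e) :
  exists b, [/\ a < b, b <= 1 & forall y, a <= u y -> exists2 z, b <= u z & d y z < e].
Proof.
pose W m := [set y | exists2 z, [set z | a + (m.+1%:R)^-1 < u z] z & d z y < e].
have ha : 0 < a <= 1 by rewrite a0 ltW.
have [M hM] : exists M, [set x | a <= u x] `<=` W M.
  apply: (compact_nat (cut_compact ha)).
  - by move=> m; exact: mopen_near.
  - move=> m n mn x [z /= hz hdz]; exists z => //=.
    by apply: le_lt_trans hz; rewrite lerD2l inv_le.
  move=> y /= ay; have [z az hdz] := nonplat (introT andP (conj a0 a1)) np ay e0.
  have [k hk] := ltr_add_invr az; by exists k => //; exists z => //; rewrite (rhoC hd).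
have iM : 0 < (M.+1%:R : R)^-1 by rewrite invr_gt0 ltr0n.
exists (a + (M.+1%:R)^-1); split.
- by rewrite ltrDl iM.
- have [y0 hy0] := cut_ne ha; have [z /= hz _] := hM y0 hy0.
  by apply: ltW; apply: lt_le_trans hz (u_le1 z).
move=> y ay; have [z /= hz hdz] := hM y ay.
by exists z; [exact: ltW | rewrite rhoC].
Qed.
Lemma plat_witness (a : R) : platform d u a -> exists x, exists r : R,
  [/\ 0 < r, u x = a & forall y, a < u y -> r <= d x y].
Proof.
move=> [/andP[a0 a1] [sub neq]].
move: sub neq; rewrite cutE // => sub neq.
have [x ax nx] : exists2 x, a <= u x & ~ mclosure d [set x | a < u x] x.
  apply: contrapT => hn; apply: neq; apply/seteqP; split => // x ax.
  by apply: contrapT => nx; apply: hn; exists x.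
move: nx => /existsNP [r /not_implyP [r0 /forall2NP h]].
have hr : forall y, a < u y -> r <= d x y.
  by move=> y ay; case: (h y) => // /negP; rewrite -leNgt.
exists x, r; split => //.
apply/eqP; rewrite eq_le ax andbT; apply/negP => /negP; rewrite -ltNge => xa.
by have := hr x xa; rewrite rho_xx //; lra.
Qed.

Lemma platform_countable : countable (platform d u).
Proof.
pose S (j k : nat) := [set a : R | platform d u a /\ (j.+1%:R)^-1 <= a /\
  exists x, u x = a /\ forall y, a < u y -> (k.+1%:R)^-1 <= d x y].
have sub : platform d u `<=` \bigcup_(jk in [set: nat * nat]) S jk.1 jk.2.
  move=> a pa; have [x [r [r0 uxa hr]]] := plat_witness pa.
  have /andP[a0 _] := pa.1.
  have [j hj] := ltr_add_invr a0; have [k hk] := ltr_add_invr r0.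
  exists (j, k) => //=; split => //; split; first by move: hj; rewrite add0r => /ltW.
  exists x; split => // y ay; apply: le_trans (hr y ay).
  by move: hk; rewrite add0r => /ltW.
apply: sub_countable (subset_card_le sub) _.
apply: bigcup_countable; first exact: countableP.
move=> [j k] _ /=; apply: finite_set_countable.
have [x1 _] := cut_ne (a := 1) (introT andP (conj ltr01 (lexx _))).
pose c : R := (j.+1%:R)^-1.
have c0 : 0 < c by rewrite invr_gt0 ltr0n.
have c1 : c <= 1 by rewrite /c invf_le1 ?ltr0n // ler1n.
pose rr : R := (k.+1%:R)^-1.
have rr0 : 0 < rr by rewrite invr_gt0 ltr0n.
have rr20 : 0 < rr / 2 by rewrite divr_gt0.
have cK := cut_compact (introT andP (conj c0 c1)).
have cov : [set x | c <= u x] `<=` \bigcup_(z in setT) mball d z (rr / 2).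
  by move=> x _; exists x => //; rewrite /mball /= rho_xx.
have [F fF hF] := cK _ _ (fun z => @mopen_ball _ _ _ hd z (rr / 2)) cov.
have [w hw] : {w : R -> X & forall a, S j k a ->
    u (w a) = a /\ forall y, a < u y -> rr <= d (w a) y}.
  apply: (@choice _ _ (fun a x => S j k a ->
    u x = a /\ forall y, a < u y -> rr <= d x y)) => a.
  have [[_ [_ [x hx]]]|nS] := pselect (S j k a); first by exists x.
  by exists x1.
pose D := [set z | exists2 a, S j k a & d z (w a) < rr / 2].
have [g hg] : {g : X -> R & forall z, D z -> S j k (g z) /\ d z (w (g z)) < rr / 2}.
  apply: (@choice _ _ (fun z a => D z -> S j k a /\ d z (w a) < rr / 2)) => z.
  have [[a Sa ha]|nD] := pselect (D z); first by exists a.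
  by exists 0.
apply: (@sub_finite_set _ _ (g @` F)); last exact: finite_image.
move=> a Sa.
have [ua hwa] := hw a Sa.
have [_ [ca _]] := Sa.
have Kw : [set x | c <= u x] (w a) by rewrite /= ua.
have [z Fz hz] := hF _ Kw.
have Dz : D z by exists a.
have [Sg hgz] := hg z Dz.
exists z => //.
have [ug hwg] := hw _ Sg.
have hsum : rr / 2 + rr / 2 = rr by rewrite -splitr.
apply/eqP; rewrite eq_le; apply/andP; split; rewrite leNgt; apply/negP => hlt.
- have hl : a < u (w (g z)) by rewrite ug.
  have h1 := hwa (w (g z)) hl.
  have h2 := rho_tri hd (w a) z (w (g z)).
  rewrite (rhoC hd (w a) z) in h2.
  have : d (w a) (w (g z)) < rr.
    by apply: le_lt_trans h2 _; rewrite -hsum; apply: ltrD.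
  by rewrite ltNge h1.
- have hl : g z < u (w a) by rewrite ua.
  have h1 := hwg (w a) hl.
  have h2 := rho_tri hd (w (g z)) z (w a).
  rewrite (rhoC hd (w (g z)) z) in h2.
  have : d (w (g z)) (w a) < rr.
    by apply: le_lt_trans h2 _; rewrite -hsum; apply: ltrD.
  by rewrite ltNge h1.
Qed.
End Fz.

Section Meas.
Variable R : realType.

Lemma avoid_null (N : set R) : measurable N -> (@lebesgue_measure R) N = 0%E ->
  forall a b : R, a < b -> exists p, a < p < b /\ ~ N p.
Proof.
move=> mN N0 a b ab; apply: contrapT => hn.
have sub : `]a, b[%classic `<=` N.
  move=> p; rewrite /= in_itv /= => hp; apply: contrapT => Np; apply: hn.
  by exists p.
have h : ((@lebesgue_measure R) `]a, b[%classic <= (@lebesgue_measure R) N)%E.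
  by apply: le_measure => //; rewrite inE //; exact: measurable_itv.
move: h; rewrite N0 lebesgue_measure_itv /= lte_fin ab -EFinD lee_fin.
by rewrite subr_le0 leNgt ab.
Qed.

Lemma dense_countable (P Y : set R) : Y `<=` [set y | 0 <= y] ->
  (forall y, Y y -> forall e : R, 0 < e -> exists2 p, P p & `|p - y| < e) ->
  exists P', [/\ countable P', P' `<=` P &
    forall y, Y y -> forall e : R, 0 < e -> exists2 p, P' p & `|p - y| < e].
Proof.
move=> Ypos dP.
pose c (kn : nat * nat) : R := kn.1%:R / kn.2.+1%:R.
pose r (kn : nat * nat) : R := 2 / kn.2.+1%:R.
pose D := [set kn | exists2 q, P q & `|q - c kn| < r kn].
have [g hg] : {g : nat * nat -> R & forall kn, D kn -> P (g kn) /\ `|g kn - c kn| < r kn}.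
  apply: (@choice _ _ (fun kn y => D kn -> P y /\ `|y - c kn| < r kn)) => kn; have [[q Pq hq]|nD] := pselect (D kn).
    by exists q.
  by exists 0.
exists (g @` D); split.
- apply: sub_countable (card_image_le _ _) _; exact: countableP.
- by move=> _ [kn Dkn <-]; case: (hg kn Dkn).
move=> y Yy e e0.
have y0 := Ypos y Yy.
have [n hn] : exists n : nat, 3 / n.+1%:R < e.
  have [|n hn] := ltr_add_invr (_ : 0 < e / 3); first by rewrite divr_gt0.
  exists n; move: hn; rewrite add0r ltr_pdivlMr // mulrC.
  by rewrite -[_ < e]ltr_pdivlMr // mulrC.
set N : R := n.+1%:R.
have N0 : 0 < N by rewrite /N ltr0n.
set k := Num.truncn (y * N).
have /andP[hk1 hk2] := truncn_itv (mulr_ge0 y0 (ltW N0)).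
have hcy : `|y - c (k, n)| < 1 / N.
  rewrite /c /= -/N -/k ger0_norm.
    by rewrite ltrBlDr -mulrDl ltr_pdivlMr // addrC natr1.
  by rewrite subr_ge0 ler_pdivrMr.
have [q Pq hq] := dP y Yy (1 / N) (divr_gt0 ltr01 N0).
have Dk : D (k, n).
  exists q => //; rewrite /r /= -/N.
  have -> : q - c (k, n) = (q - y) + (y - c (k, n)) by rewrite addrA subrK.
  apply: le_lt_trans (ler_normD _ _) _.
  have -> : 2 / N = 1 / N + 1 / N by rewrite -mulrDl.
  exact: ltrD.
have [_ hgk] := hg _ Dk.
exists (g (k, n)); first by exists (k, n).
have -> : g (k, n) - y = (g (k, n) - c (k, n)) - (y - c (k, n)).
  by rewrite opprB addrA subrK.
apply: le_lt_trans (ler_normB _ _) _; apply: lt_trans hn.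
rewrite -/N; have -> : 3 / N = 2 / N + 1 / N by rewrite -mulrDl; congr (_ * _); lra.
exact: ltrD hgk hcy.
Qed.

End Meas.

Section Thm.
Variable R : realType.
Variables (X : Type) (d : X -> X -> R).
Hypothesis hd : is_metric d.
Variables (u : X -> R) (us : nat -> X -> R).
Hypothesis hu : F_USCG d u.
Hypothesis hus : forall n, F_USCG d (us n).

Lemma endo0 (v : X -> R) : F_USCG d v -> forall x, endo v (x, 0).
Proof. by move=> hv x; split => /=; [rewrite lexx ler01 | exact: u_ge0 hv x]. Qed.

Lemma dbar_metric : is_metric (dbar d).
Proof.
rewrite /dbar; split.
- by move=> p q; rewrite addr_ge0 // rho_ge0.
- move=> [x a] [y b] /=; split; last by case=> -> ->; rewrite rho_xx // subrr normr0 addr0.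
  move=> h; have h1 := rho_ge0 hd x y; have h2 := normr_ge0 (a - b).
  have e1 : d x y = 0 by lra.
  have e2 : `|a - b| = 0 by lra.
  case: hd => _ hd2 _ _; rewrite (hd2 x y).1 //.
  by move/eqP: e2; rewrite normr_eq0 subr_eq0 => /eqP ->.
- by move=> p q; rewrite (rhoC hd) distrC.
- move=> p q r; have := rho_tri hd p.1 q.1 r.1; have := ler_distD q.2 p.2 r.2.
  lra.
Qed.

Lemma Hend_ge0 n : (0 <= Hend d (us n) u)%E.
Proof.
have [x _] := cut_ne hu (a := 1) (introT andP (conj ltr01 (lexx _))).
by apply: haus_ge0; [exact: dbar_metric | exists (x, 0); exact: endo0 (hus n) x].
Qed.

Lemma cut_haus_ge0 (a : R) n : 0 < a <= 1 ->
  (0 <= hausdorff d [set x | (a <= us n x)%R] [set x | (a <= u x)%R])%E.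
Proof. by move=> ha; apply: haus_ge0 => //; have [x hx] := cut_ne (hus n) ha; exists x. Qed.

Lemma cut_cvgE (a : R) : 0 < a <= 1 -> cut_cvg d us u a <->
  forall e : R, 0 < e -> \forall n \near \oo,
    (hausdorff d [set x | (a <= us n x)%R] [set x | (a <= u x)%R] <= e%:E)%E.
Proof.
move=> ha; have /andP[a0 _] := ha.
rewrite /cut_cvg.
have -> : (fun n => hausdorff d (Defs.cut d (us n) a) (Defs.cut d u a)) =
    (fun n => hausdorff d [set x | a <= us n x] [set x | a <= u x]).
  by apply: funext => n; rewrite (cutE d (us n) a0) (cutE d u a0).
exact: (cvg0P (fun n => cut_haus_ge0 n ha)).
Qed.

Lemma i_iii : (fun n => Hend d (us n) u) @ \oo --> 0%E ->
  forall a, (`]0, 1[ `\` platform d u) a -> cut_cvg d us u a.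
Proof.
move=> hi a [ha np]; move: ha; rewrite /= in_itv /= => /andP[a0 a1].
have ha : 0 < a <= 1 by rewrite a0 ltW.
apply/(cut_cvgE ha) => e e0.
have e20 : 0 < e / 2 by lra.
have [bL [bL0 bLa hL]] := left_cont hd hu a0 (ltW a1) e20.
have [bR [abR bR1 hR]] := right_cont hd hu a0 a1 np e20.
have [δ [δ0 hδ1 hδ2 hδ3]] : exists δ : R, [/\ 0 < δ, δ <= a - bL, δ <= bR - a & δ <= e / 2].
  exists (Num.min (Num.min (a - bL) (bR - a)) (e / 2)).
  have h1 : 0 < a - bL by lra.
  have h2 : 0 < bR - a by lra.
  by rewrite !lt_min !ge_min h1 h2 e20 !lexx /= !orbT.
have δ20 : 0 < δ / 2 by lra.
have hev := (cvg0P Hend_ge0).1 hi (δ / 2) δ20.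
near=> n.
have hH : (Hend d (us n) u < δ%:E)%E.
  have : (Hend d (us n) u <= (δ / 2)%:E)%E by near: n; exact: hev.
  by move/le_lt_trans; apply; rewrite lte_fin; lra.
apply: haus_le.
- move=> x /= ax.
  have hxa : endo (us n) (x, a) by split => //=; rewrite (ltW a0) (ltW a1).
  have [[y t] [/andP[t0 t1] ty] hdb] := haus_lt_l hH hxa.
  rewrite /dbar /= in hdb ty.
  have hn := ler_norm (a - t); have hn0 := normr_ge0 (a - t).
  have dxy := rho_ge0 hd x y.
  have hy : bL <= u y by lra.
  have [z az dyz] := hL y hy.
  exists z => //; have := rho_tri hd x y z; lra.
- move=> y /= ay.
  have [z bz dyz] := hR y ay.
  have hzb : endo u (z, bR) by split => //=; rewrite bR1 andbT; lra.
  have [[x t] [/andP[t0 t1] tx] hdb] := haus_lt_r hH hzb.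
  rewrite /dbar /= in hdb tx.
  have hn := ler_norm (bR - t); have hn0 := normr_ge0 (bR - t).
  have dzx := rho_ge0 hd z x.
  exists x; first by rewrite /=; lra.
  have := rho_tri hd y z x; lra.
Unshelve. all: by end_near.
Qed.
Lemma v_i (P : set R) : P `<=` `]0, 1[ `\` platform d u ->
  (forall a b : R, 0 <= a -> a < b -> b <= 1 -> exists p, P p /\ a < p < b) ->
  (forall a, P a -> cut_cvg d us u a) -> (fun n => Hend d (us n) u) @ \oo --> 0%E.
Proof.
move=> PS Pd Pc.
have P01 : forall p, P p -> 0 < p <= 1.
  by move=> p /PS [+ _]; rewrite /= in_itv /= => /andP[p0 p1]; rewrite p0 ltW.
apply/(cvg0P Hend_ge0) => e e0.
have [N [h [h0 Kh he]]] : exists N : nat, exists h : R,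
    [/\ 0 < h, N.+1%:R * h = 1 & 3 * h <= e].
  have [|N hN] := ltr_add_invr (_ : 0 < e / 3); first by lra.
  exists N, (N.+1%:R)^-1; split.
  - by rewrite invr_gt0 ltr0n.
  - by rewrite mulfV // pnatr_eq0.
  - by move: hN; rewrite add0r; move: (N.+1%:R^-1) => i hi; lra.
pose K := N.+1.
have hp : forall k : 'I_K, exists p, P p /\ k%:R * h < p < k.+1%:R * h.
  move=> k; apply: Pd.
  - by rewrite mulr_ge0 // ltW.
  - by rewrite ltr_pM2r // ltr_nat.
  - by rewrite -[X in _ <= X]Kh ler_pM2r // ler_nat; exact: ltn_ord k.
have [p hpk] := choice hp.
have hev : \forall n \near \oo, forall k : 'I_K,
   (hausdorff d [set x | (p k <= us n x)%R] [set x | (p k <= u x)%R] <= (h / 2)%:E)%E.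
  apply: filter_forall => k.
  have [Pk _] := hpk k.
  have := Pc _ Pk; rewrite (cut_cvgE (P01 _ Pk)) => hc.
  by apply: hc; lra.
have lev : forall t : R, h <= t -> t <= 1 -> exists k : 'I_K, p k <= t /\ t - p k < 2 * h.
  move=> t ht t1.
  have th0 : 0 <= t / h by apply: divr_ge0; lra.
  pose j := Num.truncn (t / h).
  have /andP[j1 j2] := truncn_itv th0; rewrite -/j in j1 j2.
  have jpos : (0 < j)%N by rewrite truncn_gt0 ler_pdivlMr // mul1r.
  rewrite ler_pdivlMr // in j1; rewrite ltr_pdivrMr // in j2.
  have jK : (j.-1 < K)%N.
    rewrite -ltnS prednK // ltnS -(ler_nat R) -(ler_pM2r h0) Kh.
    lra.
  exists (Ordinal jK).
  have [_ /andP[lo hi]] := hpk (Ordinal jK).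
  rewrite /= prednK // in hi.
  have ej : (j.-1)%:R = j%:R - 1 :> R by rewrite -[in RHS](prednK jpos) -natr1 addrK.
  rewrite /= ej in lo; rewrite -natr1 in j2.
  move: lo hi j1 j2; move: (j%:R : R) => J.
  split; lra.
near=> n.
have hH : forall k : 'I_K,
    (hausdorff d [set x | (p k <= us n x)%R] [set x | (p k <= u x)%R] < h%:E)%E.
  move=> k; have hk : forall k : 'I_K,
      (hausdorff d [set x | (p k <= us n x)%R] [set x | (p k <= u x)%R] <= (h / 2)%:E)%E.
    by near: n; exact: hev.
  by apply: le_lt_trans (hk k) _; rewrite lte_fin; lra.
apply: haus_le.
- move=> [x t] [/andP[t0 t1] tx] /=; rewrite /= in t0 t1 tx.
  have [th|ht] := ltP t h.
    exists (x, 0); first exact: endo0 hu x.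
    by rewrite /dbar /= rho_xx // subr0 ger0_norm // add0r; lra.
  have [k [pt tp]] := lev t ht t1.
  have [Pk _] := hpk k; have /andP[pk0 pk1] := P01 _ Pk.
  have hxk : [set x | (p k <= us n x)%R] x by rewrite /=; lra.
  have [y yk dxy] := haus_lt_l (hH k) hxk.
  exists (y, p k); first by split => //=; rewrite (ltW pk0) pk1.
  rewrite /dbar /= ger0_norm; lra.
- move=> [y t] [/andP[t0 t1] ty] /=; rewrite /= in t0 t1 ty.
  have [th|ht] := ltP t h.
    exists (y, 0); first exact: endo0 (hus n) y.
    by rewrite /dbar /= rho_xx // subr0 ger0_norm // add0r; lra.
  have [k [pt tp]] := lev t ht t1.
  have [Pk _] := hpk k; have /andP[pk0 pk1] := P01 _ Pk.
  have hyk : [set x | (p k <= u x)%R] y by rewrite /=; lra.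
  have [x xk dyx] := haus_lt_r (hH k) hyk.
  exists (x, p k); first by split => //=; rewrite (ltW pk0) pk1.
  rewrite /dbar /= ger0_norm; lra.
Unshelve. all: by end_near.
Qed.
End Thm.

Unset Implicit Arguments. Set Strict Implicit.

Theorem theorem4p6 (R : realType) (X : Type) (d : X -> X -> R)
  (hd : is_metric d) (u : X -> R) (us : nat -> X -> R)
  (hu : F_USCG d u) (hus : forall n, F_USCG d (us n)) :
  [<-> (fun n => Hend d (us n) u) @ \oo --> 0%E;
       {ae (@lebesgue_measure R), forall a, `]0, 1[%classic a -> cut_cvg d us u a};
       forall a, (`]0, 1[ `\` platform d u) a -> cut_cvg d us u a;
       exists P : set R, [/\ P `<=` `]0, 1[ `\` platform d u,
           dense_in P (`]0, 1[ `\` platform d u) &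
           forall a, P a -> cut_cvg d us u a];
       exists P : set R, [/\ countable P, P `<=` `]0, 1[ `\` platform d u,
           dense_in P (`]0, 1[ `\` platform d u) &
           forall a, P a -> cut_cvg d us u a]].
Proof.
have Pc := platform_countable hd hu.
have Pm : measurable (platform d u) := countable_measurable (@measurable_set1 R) Pc.
have P0 : (@lebesgue_measure R) (platform d u) = 0%E := countable_lebesgue_measure0 Pc.
have A := i_iii hd hu hus.
pose Si := (fun n => Hend d (us n) u) @ \oo --> 0%E.
pose Sii := {ae (@lebesgue_measure R), forall a, `]0, 1[%classic a -> cut_cvg d us u a}.
pose Siv := exists P : set R, [/\ P `<=` `]0, 1[ `\` platform d u,
           dense_in P (`]0, 1[ `\` platform d u) &
           forall a, P a -> cut_cvg d us u a].
pose Sv := exists P : set R, [/\ countable P, P `<=` `]0, 1[ `\` platform d u,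
           dense_in P (`]0, 1[ `\` platform d u) &
           forall a, P a -> cut_cvg d us u a].
have B : (forall a, (`]0, 1[ `\` platform d u) a -> cut_cvg d us u a) -> Sii.
  by move=> h; exists (platform d u); split => // a /= na; apply: contrapT => np;
    apply: na => ha; apply: h.
have C : Sii -> Siv.
  move=> [N [mN N0 sN]].
  have mNP : measurable (N `|` platform d u) by exact: measurableU.
  have NP0 : (@lebesgue_measure R) (N `|` platform d u) = 0%E.
    apply/eqP; rewrite eq_le measure_ge0 andbT.
    apply: le_trans (measureU2 _ mN Pm) _.
    rewrite [X in (X + _ <= _)%E](_ : _ = 0%E); last exact: N0.
    rewrite [X in (_ + X <= _)%E](_ : _ = 0%E); last exact: P0.
    by rewrite adde0.
  exists [set a | (`]0, 1[ `\` platform d u) a /\ cut_cvg d us u a]; split.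
  - by move=> a [].
  - move=> y [hy npy] e e0; move: hy; rewrite /= in_itv /= => /andP[y0 y1].
    have f1 : (0 : R) < 1 by lra.
    have f2 : 0 < y + e by lra.
    have f3 : y - e < 1 by lra.
    have f4 : y - e < y + e by lra.
    have ab : Num.max 0 (y - e) < Num.min 1 (y + e).
      by rewrite gt_max !lt_min f1 f2 f3 f4.
    have [p [/andP[hp1 hp2] nNp]] := avoid_null mNP NP0 ab.
    move: hp1; rewrite gt_max => /andP[p0 pye].
    move: hp2; rewrite lt_min => /andP[p1 pye2].
    have p01 : `]0, 1[%classic p by rewrite /= in_itv /= p0 p1.
    exists p.
    + split; first by split => // pp; apply: nNp; right.
      apply: contrapT => nc; apply: nNp; left; apply: sN => /= h; apply: nc.
      exact: h.
    + rewrite ltr_norml; apply/andP; split; lra.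
  - by move=> a [].
have D : Siv -> Sv.
  move=> [P [PS Pd Pcv]].
  have Ypos : (`]0, 1[ `\` platform d u) `<=` [set y | 0 <= y].
    by move=> y [+ _]; rewrite /= in_itv /= => /andP[y0 _]; apply: ltW.
  have [P' [cP' P'P dP']] := dense_countable Ypos Pd.
  exists P'; split => //.
  - by move=> a /P'P /PS.
  - by move=> a /P'P /Pcv.
have E : Sv -> Si.
  move=> [P [_ PS Pd Pcv]].
  apply: (v_i hd hu hus PS _ Pcv) => a b a0 ab b1.
  have [y [/andP[ay yb] npy]] := avoid_null Pm P0 ab.
  have Yy : (`]0, 1[ `\` platform d u) y.
    split => //; rewrite /= in_itv /=; apply/andP; split; lra.
  have m0 : 0 < Num.min (y - a) (b - y) by rewrite lt_min !subr_gt0 ay yb.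
  have [p Pp hp] := Pd y Yy _ m0.
  exists p; split => //.
  move: hp; rewrite lt_min => /andP[h1 h2].
  rewrite ltr_norml in h1; rewrite ltr_norml in h2.
  move/andP: h1 => [h1 h1']; move/andP: h2 => [h2 h2'].
  apply/andP; split; lra.
tfae.
- by move=> /A /B.
- by move=> /C /D /E /A.
- by move=> /B /C.
- exact: D.
- exact: E.
Qed.
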